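(* Let $\alpha>0$, $\beta>0$, $K\ge1$, $A\ge1$, $\eta>0$, $s\in(0,1)$ and $\delta\in(0,1)$. Let $(\nu_\omega)_{\omega\in\Omega}$ be a $(\delta,\alpha,K)$-Furstenberg tuple such that $\Omega$ satisfies the Frostman condition \[ |\Omega\cap B_r|\le A\,r^\beta|\Omega|\quad\text{for every ball }B_r\subset\mathbb{R}^2\text{ of radius } r\in[\delta,1]. \] Write $E_\omega=\operatorname{supp}(\nu_\omega)$, $E=\bigcup_{\omega\in\Omega}E_\omega$, and assume $\mathcal{N}_{\delta^s}(E)\le(\delta^s)^{-\alpha-\beta/2-\eta}$. Let $\Lambda$ be a maximal $\delta^s$-separated subset of $\Omega$ and for $\lambda\in\Lambda$ put $\Omega_\lambda=\Omega\cap B^2(\lambda,\delta^s)$. Then there is a set $\Lambda'\subset\Lambda$ such that \[ |\Lambda'|\ \ge\ c\,(\delta^s)^{-\beta} \qquad\text{and}\qquad |\Omega_\lambda|\ \ge\ c\,(\delta^s)^{\beta+2\eta}|\Omega|\ \text{ for all }\lambda\in\Lambda', \] where $c>0$ depends only on $K,\alpha,\beta$ and $A$.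
   Context: $B^d(x,r)$ denotes the open ball of centre $x$ and radius $r$ in $\mathbb{R}^d$, $B^d=B^d(0,1)$, and $B_r$ an arbitrary ball of radius $r$. A probability measure $\mu$ on $B^1=(-1,1)$ is a $(\delta,\alpha,K)$-measure if $\mu(B_r)\le Kr^\alpha$ for every ball $B_r$ of radius $r\in[\delta,1]$. For $\omega=(a,b)\in\mathbb{R}^2$, $L_\omega(t)=at+b$, and $L_\omega$ also denotes the line $\{(t,y):y=at+b\}$. A family $(\nu_\omega)_{\omega\in\Omega}$ is a $(\delta,\alpha,K)$-Furstenberg tuple if $\Omega\subset B^2$ is a $\delta$-separated set and, for each $\omega\in\Omega$, there is a $(\delta,\alpha,K)$-measure $\nu'_\omega$ with $\nu_\omega$ equal to the push-forward of $\nu'_\omega$ under the map $x\mapsto(x,L_\omega(x))$. $\mathcal{N}_r(A)$ denotes the smallest number of balls of radius $r$ needed to cover $A$; $|\cdot|$ denotes cardinality. *)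

(* Defs.v *)
From HB Require Import structures.
From mathcomp Require Import all_boot all_order all_algebra.
From mathcomp Require Import finmap.
From mathcomp Require Import all_classical all_reals all_analysis.
Set Implicit Arguments. Unset Strict Implicit. Unset Printing Implicit Defensive.
Import Order.TTheory GRing.Theory Num.Theory.
Local Open Scope classical_set_scope.
Local Open Scope ring_scope.

Section Defs.
Variable R : realType.

Definition dist2 (p q : R * R) : R :=
  Num.sqrt ((p.1 - q.1) ^+ 2 + (p.2 - q.2) ^+ 2).

Definition ball2 (x : R * R) (r : R) : set (R * R) := [set p | dist2 x p < r].

Definition ball1 (x r : R) : set R := [set y | `|y - x| < r].

Definition Lw (w : R * R) (t : R) : R := w.1 * t + w.2.

Definition graphmap (w : R * R) (x : R) : R * R := (x, Lw w x).

(* (delta, alpha, K)-measure: probability measure on B^1 = (-1,1)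
   (modelled as a probability on R giving full mass to (-1,1)) with
   mu(B_r) <= K r^alpha for all balls of radius r in [delta, 1]. *)
Definition dak_measure (delta alpha K : R) (mu : probability R R) : Prop :=
  mu (~` `]-1, 1[%classic) = 0%E /\
  forall (x r : R), delta <= r <= 1 -> (mu (ball1 x r) <= (K * r `^ alpha)%:E)%E.

Definition separated (delta : R) (S : {fset (R * R)}) : Prop :=
  forall p q, p \in S -> q \in S -> p != q -> delta <= dist2 p q.

(* (delta, alpha, K)-Furstenberg tuple (given through the measures nu'_omega;
   nu_omega is the push-forward of nu'_omega under x |-> (x, L_omega x)). *)
Definition furstenberg_tuple (delta alpha K : R) (Omega : {fset (R * R)})
    (nu' : R * R -> probability R R) : Prop :=
  (forall w, w \in Omega -> dist2 w (0, 0) < 1) /\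
  separated delta Omega /\
  (forall w, w \in Omega -> dak_measure delta alpha K (nu' w)).

Definition nu_of (nu' : R * R -> probability R R) (w : R * R) :
    set (R * R) -> \bar R := pushforward (nu' w) (graphmap w).

Definition msupp (nu : set (R * R) -> \bar R) : set (R * R) :=
  [set p | forall r, 0 < r -> (0 < nu (ball2 p r))%E].

Definition covN (A : set (R * R)) (r : R) : \bar R :=
  ereal_inf [set ((size cs)%:R)%:E | cs in
     [set cs : seq (R * R) | A `<=` \bigcup_(c in [set` cs]) ball2 c r]].

Definition maximal_separated (rho : R) (Lambda Omega : {fset (R * R)}) : Prop :=
  (Lambda `<=` Omega)%fset /\ separated rho Lambda /\
  forall L2 : {fset (R * R)}, (Lambda `<=` L2)%fset -> (L2 `<=` Omega)%fset ->
     separated rho L2 -> L2 = Lambda.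

Definition fset_ball (Omega : {fset (R * R)}) (x : R * R) (r : R) : {fset (R * R)} :=
  [fset w in Omega | dist2 x w < r]%fset.

End Defs.

(* Main.v *)
Require Import Defs.
From HB Require Import structures.
From mathcomp Require Import all_boot all_order all_algebra.
From mathcomp Require Import finmap.
From mathcomp Require Import all_classical all_reals all_analysis.
From mathcomp Require Import ring lra.
Import Order.TTheory GRing.Theory Num.Theory.
Local Open Scope classical_set_scope.
Local Open Scope ring_scope.

Section P1.
Variable R : realType.
Implicit Types p q : R * R.

Lemma normK2 (x : R) : `|x| ^+ 2 = x ^+ 2.
Proof. exact: real_normK (num_real _). Qed.

Lemma dist2_sym p q : dist2 p q = dist2 q p.
Proof. by rewrite /dist2 -(sqrrN (p.1 - q.1)) -(sqrrN (p.2 - q.2)) !opprB. Qed.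

Lemma dist2_ge0 p q : 0 <= dist2 p q.
Proof. exact: sqrtr_ge0. Qed.

Lemma dist2_1 p q : `|p.1 - q.1| <= dist2 p q.
Proof.
rewrite /dist2 -sqrtr_sqr; apply: ler_wsqrtr.
by rewrite lerDl sqr_ge0.
Qed.

Lemma dist2_2 p q : `|p.2 - q.2| <= dist2 p q.
Proof.
rewrite /dist2 -sqrtr_sqr; apply: ler_wsqrtr.
by rewrite lerDr sqr_ge0.
Qed.

Lemma dist2_lt p q r : 0 < r ->
  (p.1 - q.1) ^+ 2 + (p.2 - q.2) ^+ 2 < r ^+ 2 -> dist2 p q < r.
Proof.
move=> r0 h; rewrite /dist2 -(ger0_norm (ltW r0)) -sqrtr_sqr ltr_sqrt //.
by rewrite exprn_gt0.
Qed.

Lemma dist2_xx p : dist2 p p = 0.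
Proof. by rewrite /dist2 !subrr expr0n /= addr0 sqrtr0. Qed.

Lemma trunc_close (u v : R) : Num.truncn u = Num.truncn v -> 0 <= u -> 0 <= v ->
  `|u - v| < 1.
Proof.
move=> e u0 v0.
move: (truncn_itv u0) (truncn_itv v0); rewrite e.
move=> /andP[h1 h2] /andP[h3 h4].
rewrite -natr1 in h2 h4.
rewrite ltr_norml; apply/andP; split; lra.
Qed.

Lemma packing (S : {fset (R * R)}) (rho L a0 b0 : R) :
  0 < rho -> 0 <= L -> Defs.separated rho S ->
  (forall p, p \in S -> a0 <= p.1 <= a0 + L /\ b0 <= p.2 <= b0 + L) ->
  (#|` S|%:R <= (2 * L / rho + 1) ^+ 2 :> R).
Proof.
move=> r0 L0 sep box.
pose m := (Num.truncn (2 * L / rho)).+1.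
pose h (p : R * R) := (Num.truncn ((p.1 - a0) * 2 / rho), Num.truncn ((p.2 - b0) * 2 / rho)).
pose t := [seq (i, j) | i <- iota 0 m, j <- iota 0 m].
have hsz : (size (enum_fset S) <= m * m)%N.
  rewrite -(size_map h).
  have -> : (m * m = size t)%N by rewrite size_allpairs size_iota.
  apply: uniq_leq_size.
    rewrite map_inj_in_uniq ?fset_uniq //.
    move=> p q pS qS /= [e1 e2].
    apply/eqP; apply: contraT => pq.
    have := sep p q pS qS pq.
    have [bp1 bp2] := box p pS; have [bq1 bq2] := box q qS.
    have c1 := trunc_close _ _ e1; have c2 := trunc_close _ _ e2.
    have k1 : `|p.1 - q.1| < rho / 2.
      have : `|(p.1 - a0) * 2 / rho - (q.1 - a0) * 2 / rho| < 1.
        apply: c1; apply: divr_ge0; lra.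
      have -> : (p.1 - a0) * 2 / rho - (q.1 - a0) * 2 / rho = (p.1 - q.1) * (2 / rho).
        by field; rewrite gt_eqF.
      have h2 : 0 < 2 / rho by rewrite divr_gt0.
      by rewrite normrM (gtr0_norm h2) -ltr_pdivlMr // div1r invf_div.
    have k2 : `|p.2 - q.2| < rho / 2.
      have : `|(p.2 - b0) * 2 / rho - (q.2 - b0) * 2 / rho| < 1.
        apply: c2; apply: divr_ge0; lra.
      have -> : (p.2 - b0) * 2 / rho - (q.2 - b0) * 2 / rho = (p.2 - q.2) * (2 / rho).
        by field; rewrite gt_eqF.
      have h2 : 0 < 2 / rho by rewrite divr_gt0.
      by rewrite normrM (gtr0_norm h2) -ltr_pdivlMr // div1r invf_div.
    suff : dist2 p q < rho by move=> /[swap] /le_lt_trans /[apply]; rewrite ltxx.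
    apply: dist2_lt => //.
    rewrite -(normK2 (p.1 - q.1)) -(normK2 (p.2 - q.2)).
    have n1 := normr_ge0 (p.1 - q.1); have n2 := normr_ge0 (p.2 - q.2).
    nra.
  move=> x /mapP [p pS ->]; rewrite /h; apply: allpairs_f; rewrite mem_iota add0n /m ltnS;
    apply: le_truncn; have [bp1 bp2] := box p pS.
  - rewrite ler_pM2r ?invr_gt0 //; lra.
  - rewrite ler_pM2r ?invr_gt0 //; lra.
have : (#|` S|%:R <= (m * m)%N%:R :> R) by rewrite ler_nat.
move=> /le_trans; apply; rewrite natrM -expr2 lerXn2r ?nnegrE //.
- apply: addr_ge0 => //; apply: divr_ge0 => //; lra.
- rewrite /m -natr1 lerD2r truncn_le; apply: divr_ge0 => //; lra.
Qed.

End P1.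

Local Open Scope ring_scope.

Section P2a.
Local Open Scope fset_scope.
Local Open Scope ring_scope.
Lemma card_sep (T : choiceType) (A : {fset T}) (P : pred T) :
  #|` [fset x in A | P x]| = count P (enum_fset A).
Proof.
rewrite -size_filter; apply: perm_size; apply: uniq_perm.
- exact: fset_uniq.
- by rewrite filter_uniq // fset_uniq.
move=> x; rewrite mem_filter.
have -> : (x \in enum_fset [fset x0 in A | P x0]) = (x \in [fset x0 in A | P x0]) by [].
by rewrite !inE andbC.
Qed.

Lemma count_sum (T : Type) (P : pred T) (s : seq T) :
  count P s = (\sum_(x <- s) (if P x then 1 else 0))%N.
Proof. by rewrite -sum1_count big_mkcond. Qed.

End P2a.

Section P2.
Local Open Scope fset_scope.
Local Open Scope ring_scope.
Variable R : realType.

Lemma cover_count (Om La : {fset (R * R)}) (rho : R) :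
  (forall w, w \in Om -> exists2 l, l \in La & dist2 l w < rho) ->
  (#|` Om| <= \sum_(l <- La) #|` fset_ball Om l rho|)%N.
Proof.
move=> cov.
under eq_bigr => l _ do rewrite /fset_ball card_sep count_sum.
rewrite exchange_big /=.
rewrite -[X in (X <= _)%N]sum1_size.
rewrite big_seq_cond [X in (_ <= X)%N]big_seq_cond; apply: leq_sum => w /andP[wO _].
have [l lL dl] := cov w wO.
rewrite -big_mkcond sum1_count -has_count.
by apply/hasP; exists l.
Qed.

Lemma select (Om La : {fset (R * R)}) (rho U theta M : R) :
  (forall w, w \in Om -> exists2 l, l \in La & dist2 l w < rho) ->
  (forall l, l \in La -> #|` fset_ball Om l rho|%:R <= U) ->
  #|` La|%:R <= M -> 0 <= theta -> M * theta <= #|` Om|%:R / 2 ->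
  exists La' : {fset (R * R)}, (La' `<=` La) /\
    #|` Om|%:R / 2 <= #|` La'|%:R * U /\
    forall l, l \in La' -> theta <= #|` fset_ball Om l rho|%:R.
Proof.
move=> cov up hM th0 hMt.
pose good l := theta <= #|` fset_ball Om l rho|%:R.
exists [fset l in La | good l]; split; [|split].
- by apply/fsubsetP => l; rewrite !inE => /andP[].
- have h1 := cover_count _ _ _ cov.
  have h2 : (#|` Om|%:R <= \sum_(l <- La) (#|` fset_ball Om l rho|%:R : R)).
    by rewrite -natr_sum ler_nat.
  rewrite (bigID good) /= in h2.
  have h3 : \sum_(l <- La | good l) (#|` fset_ball Om l rho|%:R : R)
      <= #|` [fset l in La | good l]|%:R * U.
    rewrite card_sep -sum1_count natr_sum big_distrl /=.
    rewrite big_seq_cond [X in _ <= X]big_seq_cond; apply: ler_sum => l /andP[lL gl]; rewrite mul1r; exact: up.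
  have h4 : \sum_(l <- La | ~~ good l) (#|` fset_ball Om l rho|%:R : R)
      <= #|` La|%:R * theta.
    apply: (@le_trans _ _ (\sum_(l <- La) theta)).
      rewrite [leRHS](bigID good) /= -[X in X <= _]add0r; apply: lerD.
        by apply: sumr_ge0.
      apply: ler_sum => l; rewrite /good -ltNge => /ltW //.
    rewrite -[#|` La|]sum1_size natr_sum big_distrl /=.
    by rewrite le_eqVlt; apply/orP; left; apply/eqP; apply: eq_bigr => *; rewrite mul1r.
  have h5 : #|` La|%:R * theta <= M * theta by rewrite ler_wpM2r.
  lra.
- by move=> l; rewrite !inE => /andP[].
Qed.

End P2.

Section P3.
Import numFieldNormedType.Exports.
Variable R : realType.

Lemma cont_h (a b c d : R) (x : R) :
  {for x, continuous (fun t : R => Num.sqrt ((a - t) ^+ 2 + (b - (c * t + d)) ^+ 2))}.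
Proof.
apply: continuous_comp; last exact: sqrt_continuous.
apply: cvgD; rewrite !expr2; apply: cvgM; try apply: cvgB; try apply: cvg_cst;
  try exact: cvg_id; try (apply: cvgD; [apply: cvgM; [exact: cvg_cst|exact: cvg_id]|exact: cvg_cst]).
Qed.

Lemma open_pre (w p : R * R) (r : R) : open (graphmap w @^-1` ball2 p r).
Proof.
have -> : graphmap w @^-1` ball2 p r =
   (fun t : R => Num.sqrt ((p.1 - t) ^+ 2 + (p.2 - (w.1 * t + w.2)) ^+ 2)) @^-1` [set y | y < r].
  by [].
apply: open_comp; last exact: open_lt.
move=> x _; exact: cont_h.
Qed.


Variables (K alpha delta rho : R) (nu' : R * R -> probability R R) (w : R * R)
  (cs : seq (R * R)).
Hypothesis Hdak : dak_measure delta alpha K (nu' w).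
Hypothesis Hsupp : msupp (nu_of nu' w) `<=` \bigcup_(c in [set` cs]) ball2 c rho.

Local Notation mu := (nu' w).
Local Notation I1 := (`]-1, 1[%classic : set R).

Definition Qs (i : nat) : set R :=
  I1 `&` (graphmap w @^-1` ball2 (nth 0 cs i) rho).
Definition Ps := seqDU Qs.

Lemma mQs i : measurable (Qs i).
Proof.
apply: measurableI; first exact: measurable_itv.
exact: measurable_realfun.open_measurable (open_pre _ _ _).
Qed.

Lemma mPs i : measurable (Ps i).
Proof.
rewrite /Ps /seqDU; apply: measurableD; first exact: mQs.
by apply: bigsetU_measurable => k _; exact: mQs.
Qed.


Definition Vs := \big[setU/set0]_(k < size cs) Qs k.

Lemma mVs : measurable Vs.
Proof. by apply: bigsetU_measurable => k _; exact: mQs. Qed.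

Lemma Znull : mu (I1 `\` Vs) = 0%E.
Proof.
set Ucs := \bigcup_(c in [set` cs]) ball2 c rho.
set F := `[-1, 1]%classic `&` ~` (graphmap w @^-1` Ucs).
have ZF : I1 `\` Vs `<=` F.
  move=> x [xI nV]; split.
    by move: xI; rewrite /= !in_itv /= => /andP[h1 h2]; rewrite !ltW.
  move=> [c cin gc]; apply: nV; rewrite /Vs -bigcup_mkord.
  exists (index c cs); first by rewrite /= index_mem.
  by split => //; rewrite /= nth_index.
have cF : compact F.
  apply: compact_closedI; first exact: segment_compact.
  apply: open_closedC; rewrite /Ucs preimage_bigcup.
  by apply: bigcup_open => c _; exact: open_pre.
have hx : forall x, exists r : R, F x -> 0 < r /\
    mu (graphmap w @^-1` ball2 (graphmap w x) r) = 0%E.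
  move=> x; apply/not_existsP => hn.
  have Fx : F x.
    apply: contrapT => nFx; by apply: (hn 1) => Fx; case: (nFx Fx).
  have [_ ngx] := Fx.
  have nsupp : ~ msupp (nu_of nu' w) (graphmap w x) by move=> /Hsupp.
  apply: nsupp => r r0; rewrite ltNge; apply/negP => hle.
  apply: (hn r) => _; split => //.
  by apply/eqP; rewrite -measure_le0.
have [rad hrad] := choice hx.
have ccF : cover_compact F by rewrite -compact_cover.
have := ccF R F
   (fun x => graphmap w @^-1` ball2 (graphmap w x) (rad x)).
case.
- by move=> x _; exact: open_pre.
- move=> x Fx; exists x => //=.
  by rewrite /ball2 /= dist2_xx; have [] := hrad x Fx.
move=> D' D'F Fcov.
apply/eqP; rewrite -measure_le0.
have mZ : measurable (I1 `\` Vs).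
  by apply: measurableD; [exact: measurable_itv | exact: mVs].
apply: le_trans (content_sub_fsum _ _ _ mZ (subset_trans ZF Fcov)) _.
- exact: finite_fset.
- move=> x _; exact: measurable_realfun.open_measurable (open_pre _ _ _).
rewrite fsbig1 // => x /D'F /set_mem Fx.
by have [] := hrad x Fx.
Qed.


Lemma triv_ord (n : nat) (P : {pred 'I_n}) :
  trivIset (fun x => P x) (fun i : 'I_n => Ps i).
Proof.
move=> i j _ _ h; apply: val_inj.
exact: (trivIset_seqDU Qs) _ _ I I h.
Qed.

Lemma sumPs : (\sum_(i < size cs) mu (Ps i) = 1)%E.
Proof.
rewrite -(measure_bigsetU_ord_cond mu (P := xpredT) (F := fun i : 'I_(size cs) => Ps i)).
2: by move=> i _; exact: mPs.
2: exact: triv_ord.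
rewrite -bigsetU_seqDU -/Vs.
apply/eqP; rewrite eq_le; apply/andP; split.
  exact: probability_le1 mVs.
have mZ : measurable (I1 `\` Vs).
  by apply: measurableD; [exact: measurable_itv | exact: mVs].
have mI : measurable (~` I1) by apply: measurableC; exact: measurable_itv.
rewrite -(probability_setT mu).
have -> : [set: R] = Vs `|` ((~` I1) `|` (I1 `\` Vs)).
  apply/seteqP; split => x // _.
  have [Vx|nVx] := pselect (Vs x); first by left.
  have [Ix|nIx] := pselect (I1 x); [by right; right | by right; left].
have h1 := @measureU2 _ _ _ mu _ _ mVs (measurableU _ _ mI mZ).
apply: le_trans h1 _.
have hZ : (mu (I1 `\` Vs) <= 0)%E by rewrite Znull.
have hI : (mu (~` I1) <= 0)%E.
  by move: (proj1 Hdak) => /eqP; rewrite -measure_le0.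
apply: le_trans (leeD (lexx _) (le_trans (@measureU2 _ _ _ mu _ _ mI mZ) (leeD hI hZ))) _.
by rewrite !adde0.
Qed.

Lemma Ps_sub i : Ps i `<=` ball1 (nth 0 cs i).1 rho.
Proof.
move=> x [[_ hx] _]; rewrite /ball1 /= distrC.
have := @dist2_1 _ (nth 0 cs i) (graphmap w x).
move: hx; rewrite /ball2 /= => hx h; exact: le_lt_trans h hx.
Qed.

Hypothesis Hr : delta <= rho <= 1.

Lemma mball1 (x r : R) : measurable (ball1 x r).
Proof.
have -> : ball1 x r = [set` `]x - r, x + r[%R].
  apply/seteqP; split => y; rewrite /ball1 /= in_itv /= ltr_distl;
    move=> /andP[h1 h2]; apply/andP; split; lra.
exact: measurable_itv.
Qed.

Lemma Ps_le i : (mu (Ps i) <= (K * rho `^ alpha)%:E)%E.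
Proof.
apply: le_trans (proj2 Hdak _ _ Hr).
apply: le_measure; rewrite ?inE; [exact: mPs| |exact: Ps_sub].
exact: mball1.
Qed.


Lemma near_le (j : nat) (d : R) : delta <= d + rho <= 1 ->
  (\sum_(i < size cs | (`|(nth 0 cs i).1 - (nth 0 cs j).1| < d)%R) mu (Ps i)
     <= (K * (d + rho) `^ alpha)%:E)%E.
Proof.
move=> hd.
rewrite -(measure_bigsetU_ord_cond mu
  (P := fun i : 'I_(size cs) => (`|(nth 0 cs i).1 - (nth 0 cs j).1| < d)%R)
  (F := fun i : 'I_(size cs) => Ps i)).
2: by move=> i _; exact: mPs.
2: exact: triv_ord.
apply: le_trans (proj2 Hdak _ _ hd).
apply: le_measure; rewrite ?inE; [ | exact: mball1 | ].
- by apply: bigsetU_measurable => i _; exact: mPs.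
- apply: (big_ind (fun X => X `<=` ball1 (nth 0 cs j).1 (d + rho))) => //.
  + by move=> X Y hX hY z [/hX|/hY].
  + move=> i hi z /Ps_sub; rewrite /ball1 /= => hz.
    have := ler_distD (nth 0 cs i).1 z (nth 0 cs j).1.
    move=> h; apply: le_lt_trans h _; lra.
Qed.

Lemma Ps_pos i : (0 < mu (Ps i))%E ->
  exists x, -1 < x < 1 /\ dist2 (nth 0 cs i) (graphmap w x) < rho.
Proof.
move=> hp; have : Ps i !=set0.
  apply/set0P; apply: contraTneq hp => ->; by rewrite measure0 ltxx.
move=> [x [[hI hB] _]]; exists x; split => //.
Qed.

Definition bs i := fine (mu (Ps i)).

Lemma bsE i : mu (Ps i) = (bs i)%:E.
Proof.
rewrite /bs fineK // ge0_fin_numE //.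
exact: le_lt_trans (probability_le1 _ (mPs i)) (ltry _).
Qed.

Lemma bs_ge0 i : 0 <= bs i.
Proof. exact: fine_ge0. Qed.

Lemma bs_le i : bs i <= K * rho `^ alpha.
Proof. by have := Ps_le i; rewrite bsE lee_fin. Qed.

Lemma bs_sum : \sum_(i < size cs) bs i = 1.
Proof.
have := sumPs; under eq_bigr do rewrite bsE.
by rewrite sumEFin => -[].
Qed.

Lemma bs_near (j : nat) (d : R) : delta <= d + rho <= 1 ->
  \sum_(i < size cs | `|(nth 0 cs i).1 - (nth 0 cs j).1| < d) bs i
     <= K * (d + rho) `^ alpha.
Proof.
move=> hd; have := near_le j d hd; under eq_bigr do rewrite bsE.
by rewrite sumEFin lee_fin.
Qed.

Lemma bs_pos i : 0 < bs i ->
  exists x, -1 < x < 1 /\ dist2 (nth 0 cs i) (graphmap w x) < rho.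
Proof. by move=> h; apply: Ps_pos; rewrite bsE lte_fin. Qed.

End P3.

Local Open Scope ring_scope.

Section P4.
Local Open Scope fset_scope.
Local Open Scope ring_scope.
Variable R : realType.

Lemma far_sum (N : nat) (b : 'I_N -> R) (near : 'I_N -> 'I_N -> bool) :
  (forall i, 0 <= b i) -> \sum_i b i = 1 ->
  (forall j, \sum_(i | near j i) b i <= 1 / 2) ->
  1 / 2 <= \sum_j \sum_(k | ~~ near j k) b j * b k.
Proof.
move=> b0 bs bn.
have h j : b j / 2 <= \sum_(k | ~~ near j k) b j * b k.
  rewrite -big_distrr /=.
  have e : \sum_(k | ~~ near j k) b k = 1 - \sum_(k | near j k) b k.
    by rewrite -bs [X in _ = X - _](bigID (near j)) /= addrAC subrr add0r.
  rewrite e; have := bn j; have := b0 j; nra.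
apply: le_trans (ler_sum _ (fun j _ => h j)).
by rewrite -mulr_suml bs.
Qed.

Lemma pair_close (rho d0 : R) (cj ck l l' : R * R) (x y x' y' : R) :
  0 < rho -> 4 * rho <= d0 -> d0 <= `|cj.1 - ck.1| ->
  `|l'.1| < 1 -> -1 < x < 1 ->
  dist2 cj (graphmap l x) < rho -> dist2 ck (graphmap l y) < rho ->
  dist2 cj (graphmap l' x') < rho -> dist2 ck (graphmap l' y') < rho ->
  `|l.1 - l'.1| <= 16 * rho / d0 /\ `|l.2 - l'.2| <= 4 * rho + 16 * rho / d0.
Proof.
move=> r0 rd dd hl' hx h1 h2 h3 h4.
have d0p : 0 < d0 by lra.
have g11 := le_lt_trans (dist2_1 _ _ _) h1; have g12 := le_lt_trans (dist2_2 _ _ _) h1.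
have g21 := le_lt_trans (dist2_1 _ _ _) h2; have g22 := le_lt_trans (dist2_2 _ _ _) h2.
have g31 := le_lt_trans (dist2_1 _ _ _) h3; have g32 := le_lt_trans (dist2_2 _ _ _) h3.
have g41 := le_lt_trans (dist2_1 _ _ _) h4; have g42 := le_lt_trans (dist2_2 _ _ _) h4.
move: g11 g12 g21 g22 g31 g32 g41 g42; rewrite /graphmap /Lw /=.
move=> g11 g12 g21 g22 g31 g32 g41 g42.
set A := l.1 - l'.1; set B := l.2 - l'.2.
have exx : `|x - x'| < 2 * rho.
  have := ler_distD cj.1 x x'; rewrite (distrC x cj.1); lra.
have eyy : `|y - y'| < 2 * rho.
  have := ler_distD ck.1 y y'; rewrite (distrC y ck.1); lra.
have e1 : `|l'.1 * (x - x')| <= 2 * rho.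
  rewrite normrM; have := normr_ge0 (x - x'); nra.
have e2 : `|l'.1 * (y - y')| <= 2 * rho.
  rewrite normrM; have := normr_ge0 (y - y'); nra.
have Dx : `|A * x + B| < 4 * rho.
  have -> : A * x + B = (l.1 * x + l.2 - cj.2) + (cj.2 - (l'.1 * x' + l'.2))
      - l'.1 * (x - x') by rewrite /A /B; ring.
  apply: le_lt_trans (ler_normB _ _) _.
  apply: (@le_lt_trans _ _ (`|l.1 * x + l.2 - cj.2| + `|cj.2 - (l'.1 * x' + l'.2)| + 2 * rho)).
    apply: lerD => //; exact: ler_normD.
  rewrite distrC in g12; lra.
have Dy : `|A * y + B| < 4 * rho.
  have -> : A * y + B = (l.1 * y + l.2 - ck.2) + (ck.2 - (l'.1 * y' + l'.2))
      - l'.1 * (y - y') by rewrite /A /B; ring.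
  apply: le_lt_trans (ler_normB _ _) _.
  apply: (@le_lt_trans _ _ (`|l.1 * y + l.2 - ck.2| + `|ck.2 - (l'.1 * y' + l'.2)| + 2 * rho)).
    apply: lerD => //; exact: ler_normD.
  rewrite distrC in g22; lra.
have Dxy : `|A| * `|x - y| < 8 * rho.
  rewrite -normrM.
  have -> : A * (x - y) = (A * x + B) - (A * y + B) by ring.
  apply: le_lt_trans (ler_normB _ _) _; lra.
have xy : d0 / 2 <= `|x - y|.
  have := ler_distD x cj.1 ck.1; have := ler_distD y x ck.1.
  rewrite (distrC y ck.1); lra.
have hA : `|A| <= 16 * rho / d0.
  rewrite ler_pdivlMr //.
  have := normr_ge0 A; nra.
split => //.
have -> : B = (A * x + B) - A * x by ring.
apply: le_trans (ler_normB _ _) _.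
rewrite normrM.
have hxx : `|x| <= 1 by rewrite ler_norml; lra.
have := normr_ge0 A; have := normr_ge0 x; nra.
Qed.


Lemma fiber_bound (S : {fset (R * R)}) (rho d0 : R) (cj ck : R * R) :
  0 < rho -> 4 * rho <= d0 -> d0 <= `|cj.1 - ck.1| -> Defs.separated rho S ->
  (forall l, l \in S -> `|l.1| < 1) ->
  (forall l, l \in S -> (exists x, -1 < x < 1 /\ dist2 cj (graphmap l x) < rho) /\
                         (exists y, -1 < y < 1 /\ dist2 ck (graphmap l y) < rho)) ->
  #|` S|%:R <= (17 + 64 / d0) ^+ 2 :> R.
Proof.
move=> r0 rd dd sep hl hS.
have d0p : 0 < d0 by lra.
case: (fset_0Vmem S) => [-> | [l0 l0S]].
  by rewrite cardfs0 sqr_ge0.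
pose W := 4 * rho + 16 * rho / d0.
have Wp : 0 <= W by rewrite /W; apply: addr_ge0; [lra | apply: divr_ge0; lra].
have hW : 16 * rho / d0 <= W by rewrite /W; lra.
have := @packing R S rho (2 * W) (l0.1 - W) (l0.2 - W) r0 _ sep.
have -> : (2 * (2 * W) / rho + 1) = 17 + 64 / d0.
  rewrite /W; field; rewrite !gt_eqF //.
apply; first lra.
move=> l lS.
have [[x [hx1 hx2]] [y [hy1 hy2]]] := hS l lS.
have [[x' [hx1' hx2']] [y' [hy1' hy2']]] := hS l0 l0S.
have := pair_close rho d0 cj ck l l0 x y x' y' r0 rd dd (hl l0 l0S) hx1 hx2 hy2 hx2' hy2'.
rewrite /W; move=> [a1 a2].
move: a1 a2; rewrite !ler_norml => /andP[a1 a1'] /andP[a2 a2'].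
split; apply/andP; split; lra.
Qed.

End P4.

Local Open Scope ring_scope.

Section P5.
Local Open Scope fset_scope.
Local Open Scope ring_scope.
Variable R : realType.

Lemma sep_sub (S T : {fset (R * R)}) (r : R) :
  S `<=` T -> Defs.separated r T -> Defs.separated r S.
Proof. by move=> /fsubsetP ST sep p q pS qS; apply: sep; apply: ST. Qed.

Lemma sum_cond_const (s : seq (R * R)) (c : pred (R * R)) (m : R) :
  \sum_(l <- s | c l) m = (count c s)%:R * m.
Proof.
rewrite -sum1_count natr_sum big_distrl /=.
by apply: eq_bigr => *; rewrite mul1r.
Qed.

Lemma count_main (Om La : {fset (R * R)}) (nu' : R * R -> probability R R)
    (K alpha delta rho d0 : R) (cs : seq (R * R)) :
  0 < rho -> delta <= rho <= 1 -> 4 * rho <= d0 -> 2 * d0 <= 1 -> 0 <= alpha ->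
  0 <= K -> K * (2 * d0) `^ alpha <= 1 / 2 ->
  La `<=` Om -> furstenberg_tuple delta alpha K Om nu' -> Defs.separated rho La ->
  (\bigcup_(w in [set` Om]) msupp (nu_of nu' w) `<=`
     \bigcup_(c in [set` cs]) ball2 c rho)%classic ->
  #|` La|%:R / 2 <= (size cs)%:R ^+ 2 * ((17 + 64 / d0) ^+ 2 * (K * rho `^ alpha) ^+ 2).
Proof.
move=> r0 hr rd d1 a0 K0 Kd hsub [Hin [Hsep Hdak]] hsep hcov.
set N := size cs; set m := K * rho `^ alpha; set C := (17 + 64 / d0) ^+ 2.
have m0 : 0 <= m by apply: mulr_ge0 => //; exact: powR_ge0.
have C0 : 0 <= C by exact: sqr_ge0.
pose B l (i : 'I_N) := bs R rho nu' l cs i.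
pose near (j k : 'I_N) := `|(nth 0 cs k).1 - (nth 0 cs j).1| < d0.
have lOm l : l \in La -> l \in Om by move=> /(fsubsetP hsub).
have lsupp l : l \in La ->
    (msupp (nu_of nu' l) `<=` \bigcup_(c in [set` cs]) ball2 c rho)%classic.
  by move=> lL p hp; apply: hcov; exists l => //=; exact: lOm.
have ldak l : l \in La -> dak_measure delta alpha K (nu' l).
  by move=> lL; apply: Hdak; exact: lOm.
have step1 l : l \in La -> 1 / 2 <= \sum_j \sum_(k | ~~ near j k) B l j * B l k.
  move=> lL; apply: far_sum.
  - by move=> i; exact: bs_ge0.
  - exact: (bs_sum R K alpha delta rho nu' l cs (ldak l lL) (lsupp l lL)).
  - move=> j.
    have hd : delta <= d0 + rho <= 1 by apply/andP; split; lra.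
    apply: le_trans (bs_near R K alpha delta rho nu' l cs (ldak l lL) j d0 hd) _.
    apply: le_trans Kd; apply: ler_wpM2l => //.
    apply: ge0_ler_powR => //; rewrite ?nnegrE; lra.
have step2 : #|` La|%:R / 2 <=
    \sum_(l <- La) \sum_j \sum_(k | ~~ near j k) B l j * B l k.
  have -> : #|` La|%:R / 2 = \sum_(l <- La) (1 / 2 : R).
    by rewrite -[#|` La|]sum1_size natr_sum big_distrl /=; apply: eq_bigr => *; rewrite mul1r.
  by rewrite big_seq_cond [X in _ <= X]big_seq_cond; apply: ler_sum => l /andP[lL _]; exact: step1.
apply: le_trans step2 _.
rewrite exchange_big /=.
under eq_bigr => j _ do rewrite exchange_big /=.
have step3 (j k : 'I_N) : ~~ near j k ->
    \sum_(l <- La) B l j * B l k <= C * m ^+ 2.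
  move=> nr.
  pose c l := (0 < B l j) && (0 < B l k).
  apply: (@le_trans _ _ (\sum_(l <- La | c l) m ^+ 2)).
    rewrite [X in _ <= X]big_mkcond /=.
    rewrite big_seq_cond [X in _ <= X]big_seq_cond; apply: ler_sum => l /andP[lL _].
    rewrite /c; case: ifP.
      move=> /andP[p1 p2]; rewrite expr2; apply: ler_pM.
      - exact: bs_ge0.
      - exact: bs_ge0.
      - exact: (bs_le R K alpha delta rho nu' l cs (ldak l lL) hr _).
      - exact: (bs_le R K alpha delta rho nu' l cs (ldak l lL) hr _).
    move=> /negbT; rewrite negb_and -!leNgt => /orP[h | h].
      have -> : B l j = 0 by apply/eqP; rewrite eq_le h bs_ge0.
      by rewrite mul0r.
    have -> : B l k = 0 by apply/eqP; rewrite eq_le h bs_ge0.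
    by rewrite mulr0.
  rewrite sum_cond_const -card_sep; apply: ler_wpM2r; first exact: sqr_ge0.
  apply: (fiber_bound R _ rho d0 (nth 0 cs j) (nth 0 cs k)) => //.
  - by rewrite distrC leNgt.
  - by apply: sep_sub hsep; apply/fsubsetP => l; rewrite !inE => /andP[].
  - move=> l; rewrite !inE => /andP[lL _].
    have := Hin l (lOm l lL); have := dist2_1 R l (0, 0).
    rewrite /= subr0; lra.
  - move=> l; rewrite !inE => /andP[lL /andP[p1 p2]]; split.
    + exact: (bs_pos R rho nu' l cs _ p1).
    + exact: (bs_pos R rho nu' l cs _ p2).
apply: (@le_trans _ _ (\sum_(j < N) \sum_(k < N) C * m ^+ 2)).
  apply: ler_sum => j _.
  rewrite [X in _ <= X](bigID (fun k => ~~ near j k)) /= -[X in X <= _]addr0.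

  apply: lerD.
    by apply: ler_sum => k nk; exact: step3.
  by apply: sumr_ge0 => i _; apply: mulr_ge0 => //; exact: sqr_ge0.
under eq_bigr do rewrite sumr_const card_ord.
rewrite sumr_const card_ord -mulrnA -[X in X <= _]mulr_natl natrM -expr2.
by [].
Qed.

End P5.

Local Open Scope ring_scope.

Section P6.
Variable R : realType.

Lemma covN_ex (E : set (R * R)) (r X : R) : 0 <= X ->
  (covN E r <= X%:E)%E ->
  exists cs : seq (R * R),
    (E `<=` \bigcup_(c in [set` cs]) ball2 c r)%classic /\ (size cs)%:R <= X.
Proof.
move=> X0 hc; apply: contrapT => hn.
have hb : forall cs : seq (R * R),
    (E `<=` \bigcup_(c in [set` cs]) ball2 c r)%classic -> X < (size cs)%:R.
  move=> cs hcs; rewrite ltNge; apply/negP => hle; apply: hn; exists cs; split => //.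
have := truncn_itv X0; move=> /andP[t1 t2].
have : ((Num.truncn X).+1%:R%:E <= covN E r)%E.
  apply/ereal_infP => y [cs hcs <-]; rewrite lee_fin ler_nat.
  have := hb cs hcs => hX.
  have : ((Num.truncn X)%:R < (size cs)%:R :> R) by apply: le_lt_trans t1 hX.
  by rewrite ltr_nat.
move=> h; have := le_trans h hc; rewrite lee_fin; lra.
Qed.

Lemma max_cover (rho : R) (La Om : {fset (R * R)}) : 0 < rho ->
  maximal_separated rho La Om ->
  forall w, w \in Om -> exists2 l, l \in La & dist2 l w < rho.
Proof.
move=> r0 [sub [sep mx]] w wO; apply: contrapT => hn.
have hw : forall l, l \in La -> rho <= dist2 l w.
  move=> l lL; rewrite leNgt; apply/negP => h; apply: hn; exists l => //.
have e := mx (w |` La)%fset (fsubsetU1 _ _).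
have wL : w \in La.
  rewrite -e.
  - by rewrite fsetU11.
  - by rewrite fsubUset fsub1set wO sub.
  move=> p q; rewrite !inE => /orP[/eqP-> | pL] /orP[/eqP-> | qL] pq.
  + by rewrite eqxx in pq.
  + by rewrite dist2_sym; exact: hw.
  + exact: hw.
  + exact: sep.
by have := hw w wL; rewrite dist2_xx; lra.
Qed.

Lemma powRD' (x a b : R) : 0 < x -> x `^ (a + b) = x `^ a * x `^ b.
Proof. by move=> x0; rewrite powRD //; apply/implyP => _; rewrite gt_eqF. Qed.

Lemma powR_le1' (a e : R) : 0 < a <= 1 -> 0 <= e -> a `^ e <= 1.
Proof. by move=> ha he; have := ger_powR ha he; rewrite powRr0. Qed.

End P6.

Theorem lemma9 (R : realType) (alpha beta K A : R) :
  0 < alpha -> 0 < beta -> 1 <= K -> 1 <= A ->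
  exists c : R, 0 < c /\
  forall (eta s delta : R) (Omega : {fset (R * R)})
         (nu' : R * R -> probability R R) (Lambda : {fset (R * R)}),
    0 < eta -> 0 < s < 1 -> 0 < delta < 1 ->
    Omega != fset0 ->
    furstenberg_tuple delta alpha K Omega nu' ->
    (forall (x : R * R) (r : R), delta <= r <= 1 ->
       (#|` fset_ball Omega x r |%:R <= A * r `^ beta * #|` Omega |%:R)) ->
    (covN (\bigcup_(w in [set` Omega]) msupp (nu_of nu' w)) (delta `^ s)
       <= ((delta `^ s) `^ (- alpha - beta / 2 - eta))%:E)%E ->
    maximal_separated (delta `^ s) Lambda Omega ->
    exists Lambda' : {fset (R * R)},
      (Lambda' `<=` Lambda)%fset /\
      c * (delta `^ s) `^ (- beta) <= #|` Lambda' |%:R /\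
      forall lam, lam \in Lambda' ->
        c * (delta `^ s) `^ (beta + 2 * eta) * #|` Omega |%:R
          <= #|` fset_ball Omega lam (delta `^ s) |%:R.
Proof.
move=> a0 b0 K1 A1.
set d0 := ((2 * K)^-1 `^ alpha^-1) / 2.
have hK0 : 0 < (2 * K)^-1 by rewrite invr_gt0; lra.
have hK1 : (2 * K)^-1 <= 1 by rewrite invf_le1; lra.
have e2 : 2 * d0 = (2 * K)^-1 `^ alpha^-1 by rewrite /d0; field.
have d0p : 0 < d0 by rewrite /d0 divr_gt0 // powR_gt0.
have d01 : 2 * d0 <= 1.
  rewrite e2; apply: powR_le1'.
    by apply/andP; split.
  by rewrite invr_ge0 ltW.
have Kd : K * (2 * d0) `^ alpha <= 1 / 2.
  rewrite e2 -powRrM mulVf ?gt_eqF // (powRr1 (ltW hK0)).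
  have -> : K * (2 * K)^-1 = 1 / 2 by field; rewrite gt_eqF //; lra.
  exact: lexx.
set C1 := 2 * ((17 + 64 / d0) ^+ 2 * K ^+ 2).
set C2 := (16 / d0 + 1) ^+ 2.
set Cst := C1 + C2.
have C10 : 0 <= C1 by rewrite /C1; apply: mulr_ge0 => //; apply: mulr_ge0; exact: sqr_ge0.
have C20 : 0 <= C2 by exact: sqr_ge0.
have cp : 0 < (2 * (Cst + A))^-1 by rewrite invr_gt0 /Cst; lra.
exists (2 * (Cst + A))^-1; split => //.
set c := (2 * (Cst + A))^-1.
move=> eta s delta Om nu' La et /andP[s0 s1] /andP[de0 de1] Omn0 Hf Hfr Hcov Hmax.
set rho := delta `^ s in Hcov Hmax *.
have r0 : 0 < rho by exact: powR_gt0.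
have r1 : rho <= 1.
  by rewrite /rho; apply: powR_le1'; [apply/andP; split; lra | lra].
have dr : delta <= rho.
  by rewrite /rho; apply: ger1_powR; [apply/andP; split; lra | lra].
have hr : delta <= rho <= 1 by apply/andP; split.
set T := rho `^ (- beta - 2 * eta).
have Tp : 0 < T by exact: powR_gt0.
have Tinv : T * rho `^ (beta + 2 * eta) = 1.
  rewrite /T -powRD' //.
  have -> : - beta - 2 * eta + (beta + 2 * eta) = 0 by ring.
  exact: powRr0.
have T1 : 1 <= T.
  have P1 : rho `^ (beta + 2 * eta) <= 1.
    by apply: powR_le1'; [apply/andP; split; lra | lra].
  have P0 : 0 < rho `^ (beta + 2 * eta) by exact: powR_gt0.
  nra.
have [sub [sepLa _]] := Hmax.
have HLa : #|` La|%:R <= Cst * T.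
  case: (leP (4 * rho) d0) => hcase.
  - have X0 : 0 <= rho `^ (- alpha - beta / 2 - eta) by exact: powR_ge0.
    have [cs [hcs hN]] := covN_ex _ _ _ _ X0 Hcov.
    have h := count_main _ _ _ _ _ _ _ _ _ _ r0 hr hcase d01 (ltW a0) (le_trans ler01 K1) Kd sub Hf sepLa hcs.
    set N := (size cs)%:R in hN h.
    have N0 : 0 <= N by exact: ler0n.
    set Y := rho `^ (- beta / 2 - eta).
    have hY : rho `^ (- alpha - beta / 2 - eta) * rho `^ alpha = Y.
      by rewrite -powRD' // /Y; congr (_ `^ _); lra.
    have hYY : Y * Y = T.
      by rewrite -powRD' // /T; congr (_ `^ _); lra.
    have pa : 0 <= rho `^ alpha by exact: powR_ge0.
    have hNa : N * rho `^ alpha <= Y by rewrite -hY ler_wpM2r.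
    have hNa0 : 0 <= N * rho `^ alpha by exact: mulr_ge0.
    have hsq : (N * rho `^ alpha) ^+ 2 <= T.
      by rewrite -hYY expr2; apply: ler_pM.
    have e3 : N ^+ 2 * ((17 + 64 / d0) ^+ 2 * (K * rho `^ alpha) ^+ 2) =
        ((17 + 64 / d0) ^+ 2 * K ^+ 2) * (N * rho `^ alpha) ^+ 2 by ring.
    rewrite e3 in h.
    have Q0 : 0 <= (17 + 64 / d0) ^+ 2 * K ^+ 2 by apply: mulr_ge0; exact: sqr_ge0.
    have h2 := ler_wpM2l Q0 hsq.
    have : #|` La|%:R <= C1 * T by rewrite /C1; lra.
    move=> /le_trans; apply; rewrite /Cst; nra.
  - have box : forall p, p \in La -> -1 <= p.1 <= -1 + 2 /\ -1 <= p.2 <= -1 + 2.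
      move=> p pL.
      have pO : p \in Om by apply: (fsubsetP sub).
      have := proj1 Hf p pO.
      have := dist2_1 R p (0, 0); have := dist2_2 R p (0, 0).
      rewrite /= !subr0 => g2 g1 h.
      have := lt_le_trans (le_lt_trans g1 h) (lexx 1).
      have := lt_le_trans (le_lt_trans g2 h) (lexx 1).
      rewrite !ltr_norml => /andP[? ?] /andP[? ?].
      split; apply/andP; split; lra.
    have h := packing _ _ _ _ _ _ r0 (ler0n _ 2) sepLa box.
    have q : 2 * 2 / rho + 1 <= 16 / d0 + 1.
      rewrite lerD2r ler_pdivrMr // mulrAC ler_pdivlMr //; lra.
    have q0 : 0 <= 2 * 2 / rho + 1.
      by apply: addr_ge0 => //; apply: divr_ge0 => //; lra.
    have q2 : (2 * 2 / rho + 1) ^+ 2 <= C2.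
      by rewrite /C2 expr2 [X in _ <= X]expr2; apply: ler_pM.
    apply: le_trans h _; apply: le_trans q2 _.
    rewrite /Cst; nra.
have cov := max_cover _ _ _ _ r0 Hmax.
have up : forall l, l \in La -> #|` fset_ball Om l rho|%:R <= A * rho `^ beta * #|` Om|%:R.
  by move=> l _; exact: Hfr.
have Om0 : 0 < #|` Om|%:R :> R by rewrite ltr0n cardfs_gt0.
have pb : 0 < rho `^ (beta + 2 * eta) by exact: powR_gt0.
have th0 : 0 <= c * rho `^ (beta + 2 * eta) * #|` Om|%:R.
  by apply: mulr_ge0; [apply: mulr_ge0|]; apply: ltW.
have cC : c * (2 * (Cst + A)) = 1 by rewrite /c mulVf // gt_eqF // -invr_gt0.
have cCst : 0 <= c * Cst by apply: mulr_ge0; [apply: ltW | rewrite /Cst; lra].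
have cA : 0 <= c * A by apply: mulr_ge0; [apply: ltW | lra].
have hMt : Cst * T * (c * rho `^ (beta + 2 * eta) * #|` Om|%:R) <= #|` Om|%:R / 2.
  have -> : Cst * T * (c * rho `^ (beta + 2 * eta) * #|` Om|%:R) =
      (c * Cst) * (T * rho `^ (beta + 2 * eta)) * #|` Om|%:R by ring.
  rewrite Tinv mulr1.
  have : c * Cst <= 1 / 2 by lra.
  nra.
have [La' [sub' [hcard hth]]] := select _ _ _ _ _ _ _ cov up HLa th0 hMt.
exists La'; split; first exact: sub'.
split; last exact: hth.
have qb : 0 < rho `^ beta by exact: powR_gt0.
rewrite powRN.
set n := #|` La'|%:R.
have n0 : 0 <= n by exact: ler0n.
have h1 : 1 / 2 <= A * (n * rho `^ beta).
  have e4 : n * (A * rho `^ beta * #|` Om|%:R) = (A * (n * rho `^ beta)) * #|` Om|%:R by ring.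
  rewrite e4 in hcard.
  have e5 : #|` Om|%:R / 2 = 1 / 2 * #|` Om|%:R :> R by lra.
  rewrite e5 in hcard.
  by rewrite -(ler_pM2r Om0).
rewrite -/(c / rho `^ beta) ler_pdivrMr //.
set u := n * rho `^ beta in h1 *.
have Ap : 0 < A by lra.
nra.
Qed.
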